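(* Let $M$ be a monoid and let $X$ be a finite $M$-partial order. Then (i) $\mathrm{Fr}(X)$, with the action $ax=\{ai : i\in x\}$ for $a\in M$, $x\in \mathrm{Fr}(X)$, is a strong $M$-partial order; and (ii) the function $\pi\colon \mathrm{Fr}(X)\to X$ given by $\pi(x)=\max x$ is an epimorphism of $M$-partial orders.
   Context: A monoid acting on a set acts with the identity acting as the identity map. An $M$-partial order is a set $X$ with an action of $M$ and a partial order $\leq_X$ such that $x\leq_X y$ implies $ax\leq_X ay$. It is strong if for all $y\in X$, $a\in M$: $\{ax : x\leq_X y\}=\{x\in X : x\leq_X ay\}$. For $M$-partial orders $X,Y$, a map $f\colon X\to Y$ is an epimorphism if it is onto, $M$-equivariant, and $\leq_Y$ is the image of $\leq_X$ under $f\times f$ (i.e. $y\leq_Y y'$ iff there are $x\leq_X x'$ with $f(x)=y$, $f(x')=y'$). For a finite partial order $X$, $\mathrm{Fr}(X)$ is the set of non-empty subsets of $X$ linearly ordered by $\leq_X$, ordered by: $x\leq_{\mathrm{Fr}(X)} y$ iff $x\subseteq y$ and $i<_X j$ for all $i\in x$ and $j\in y\setminus x$. *)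

(* Defs.v *)
From mathcomp Require Import all_boot.
Set Implicit Arguments. Unset Strict Implicit. Unset Printing Implicit Defensive.

Definition is_monoid (M : Type) (mul : M -> M -> M) (one : M) : Prop :=
  (forall a b c, mul a (mul b c) = mul (mul a b) c) /\
  (forall a, mul one a = a) /\ (forall a, mul a one = a).

(* Everything below is stated relative to a carrier predicate D on a type T,
   so that subsets such as Fr(X) of {set X} can be handled directly. *)

Definition is_action (M : Type) (mul : M -> M -> M) (one : M)
  (T : Type) (D : T -> Prop) (act : M -> T -> T) : Prop :=
  (forall a x, D x -> D (act a x)) /\
  (forall x, D x -> act one x = x) /\
  (forall a b x, D x -> act (mul a b) x = act a (act b x)).

Definition is_partial_order (T : Type) (D : T -> Prop) (le : T -> T -> Prop) : Prop :=
  (forall x, D x -> le x x) /\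
  (forall x y, D x -> D y -> le x y -> le y x -> x = y) /\
  (forall x y z, D x -> D y -> D z -> le x y -> le y z -> le x z).

Definition is_MPO (M : Type) (mul : M -> M -> M) (one : M)
  (T : Type) (D : T -> Prop) (act : M -> T -> T) (le : T -> T -> Prop) : Prop :=
  is_action mul one D act /\ is_partial_order D le /\
  (forall a x y, D x -> D y -> le x y -> le (act a x) (act a y)).

Definition is_strong (M T : Type) (D : T -> Prop) (act : M -> T -> T)
  (le : T -> T -> Prop) : Prop :=
  forall (y : T) (a : M), D y ->
    forall z : T, (exists x, D x /\ le x y /\ z = act a x) <-> (D z /\ le z (act a y)).

Definition is_epimorphism (M T U : Type)
  (DT : T -> Prop) (actT : M -> T -> T) (leT : T -> T -> Prop)
  (DU : U -> Prop) (actU : M -> U -> U) (leU : U -> U -> Prop) (f : T -> U) : Prop :=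
  (forall x, DT x -> DU (f x)) /\
  (forall y, DU y -> exists x, DT x /\ f x = y) /\
  (forall a x, DT x -> f (actT a x) = actU a (f x)) /\
  (forall y y', DU y -> DU y' ->
     (leU y y' <-> exists x x', [/\ DT x, DT x', leT x x', f x = y & f x' = y'])).

Definition Fr (X : finType) (le : rel X) (x : {set X}) : Prop :=
  x != set0 /\ (forall i j, i \in x -> j \in x -> le i j \/ le j i).

Definition Fr_le (X : finType) (le : rel X) (x y : {set X}) : Prop :=
  x \subset y /\ (forall i j, i \in x -> j \in y :\: x -> le i j /\ i != j).

Definition Fr_act (M : Type) (X : finType) (act : M -> X -> X) (a : M) (x : {set X})
  : {set X} := [set act a i | i in x].

(* pi(x) = max x (x0 is only a default value, irrelevant on Fr(X)). *)
Definition Fr_max (X : finType) (le : rel X) (x0 : X) (x : {set X}) : X :=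
  odflt x0 [pick i in x | [forall j in x, le j i]].

(* Main.v *)
Require Import Defs.
From mathcomp Require Import all_boot.

Lemma chain_max (X : finType) (le : rel X) :
  (forall x, le x x) -> (forall x y z, le x y -> le y z -> le x z) ->
  forall s : seq X, s != [::] -> (forall i j, i \in s -> j \in s -> le i j \/ le j i) ->
  exists2 m, m \in s & forall j, j \in s -> le j m.
Proof.
move=> refl trans; elim=> [//|a t IH] _ Hc.
case: t IH Hc => [|b t] IH Hc.
  by exists a; [rewrite inE | move=> j; rewrite inE => /eqP->].
have [m mt Hm] : exists2 m, m \in b :: t & forall j, j \in b :: t -> le j m.
  apply: IH => // i j Hi Hj; apply: Hc; by rewrite inE ?Hi ?Hj orbT.
have mt' : m \in [:: a, b & t] by rewrite inE mt orbT.
case: (Hc a m (mem_head _ _) mt') => Ham.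
- exists m => // j; rewrite inE => /orP [/eqP->|/Hm] //.
- exists a; first exact: mem_head.
  move=> j; rewrite inE => /orP [/eqP->|/Hm Hj]; [exact: refl| exact: trans Hj Ham].
Qed.

Lemma Fr_max_eq (X : finType) (le : rel X) x0 (x : {set X}) m :
  (forall x y, le x y -> le y x -> x = y) ->
  m \in x -> (forall j, j \in x -> le j m) -> Fr_max le x0 x = m.
Proof.
move=> anti mx Hm; rewrite /Fr_max; case: pickP => [i /andP [Hi /forallP H] | H] /=.
  apply: anti; first exact: Hm.
  by have := H m; rewrite mx.
have := H m; rewrite mx /=; move/negP; case; apply/forallP => j.
by apply/implyP => /Hm.
Qed.

Lemma Fr_maxP (X : finType) (le : rel X) x0 (x : {set X}) :
  (forall x, le x x) -> (forall x y z, le x y -> le y z -> le x z) ->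
  (forall x y, le x y -> le y x -> x = y) ->
  Fr le x -> Fr_max le x0 x \in x /\ forall j, j \in x -> le j (Fr_max le x0 x).
Proof.
move=> refl trans anti [ne Hc].
have [m mx Hm] : exists2 m, m \in enum x & forall j, j \in enum x -> le j m.
  apply: chain_max => //.
    case/set0Pn: ne => k Hk; have : k \in enum x by rewrite mem_enum.
    by case: (enum x).
  by move=> i j; rewrite !mem_enum; apply: Hc.
rewrite mem_enum in mx.
have Hm' : forall j, j \in x -> le j m by move=> j Hj; apply: Hm; rewrite mem_enum.
by rewrite (@Fr_max_eq _ _ x0 _ _ anti mx Hm').
Qed.

Theorem lemma2p2 (M : Type) (mul : M -> M -> M) (one : M)
  (X : finType) (act : M -> X -> X) (le : rel X) :
  is_monoid mul one ->
  is_MPO mul one (fun _ : X => True) act (fun i j => le i j) ->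
  (is_MPO mul one (Fr le) (Fr_act act) (Fr_le le) /\
   is_strong (Fr le) (Fr_act act) (Fr_le le)) /\
  (forall x0 : X,
     is_epimorphism (Fr le) (Fr_act act) (Fr_le le)
                    (fun _ : X => True) act (fun i j => le i j) (Fr_max le x0)).
Proof.
move=> _ [[_ [act1 actM]] [[refl0 [anti0 trans0]] mono0]].
have refl : forall x, le x x by move=> x; exact: refl0.
have anti : forall x y, le x y -> le y x -> x = y by move=> x y; exact: anti0.
have trans : forall x y z, le x y -> le y z -> le x z by move=> x y z; exact: trans0.
have mono : forall a x y, le x y -> le (act a x) (act a y) by move=> a x y; exact: mono0.
have monoFr : forall a x y, Fr_le le x y -> Fr_le le (Fr_act act a x) (Fr_act act a y).
  move=> a x y [sxy H]; split; first exact: imsetS.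
  move=> i' j' /imsetP [i Hi ->]; rewrite inE => /andP [nj /imsetP [j Hj Ej]].
  subst j'.
  have jx : j \in y :\: x.
    rewrite inE Hj andbT; apply/negP => jx; move/negP: nj; apply; exact: imset_f.
  have [lij nij] := H i j Hi jx.
  split; first exact: mono.
  apply/eqP => E; move/negP: nj; apply; rewrite -E; exact: imset_f.
have closFr : forall a x, Fr le x -> Fr le (Fr_act act a x).
  move=> a x [ne Hc]; split.
    case/set0Pn: ne => k Hk; apply/set0Pn; exists (act a k); exact: imset_f.
  move=> i j /imsetP [i' Hi' ->] /imsetP [j' Hj' ->].
  by case: (Hc i' j' Hi' Hj') => h; [left|right]; apply: mono.
split; first split.
- split; [split; [exact: closFr | split] | split; [split; [|split] | ]].
  + move=> x _; rewrite /Fr_act (eq_imset _ (fun i => act1 i I)); exact: imset_id.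
  + move=> a b x _; rewrite /Fr_act -imset_comp; apply: eq_imset => i /=.
    exact: actM.
  + move=> x _; split; first exact: subxx.
    by move=> i j _; rewrite inE => /andP [/negP].
  + move=> x y _ _ [sxy _] [syx _]; apply/eqP; rewrite eqEsubset sxy syx.
    done.
  + move=> x y z _ _ _ [sxy Hxy] [syz Hyz]; split; first exact: subset_trans sxy syz.
    move=> i j Hi; rewrite inE => /andP [njx Hjz].
    case: (boolP (j \in y)) => Hjy.
      by apply: Hxy; rewrite // inE njx.
    apply: Hyz; first exact: (subsetP sxy).
    by rewrite inE Hjy.
  + by move=> a x y _ _; apply: monoFr.
- move=> y a Fy z; split.
    by move=> [x [Fx [lxy ->]]]; split; [apply: closFr | apply: monoFr].
  move=> [[nez Hcz] [szy Hz]].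
  have [ney Hcy] := Fy.
  exists [set i in y | act a i \in z].
  have Ez : Fr_act act a [set i in y | act a i \in z] = z.
    apply/eqP; rewrite eqEsubset; apply/andP; split.
      apply/subsetP => k /imsetP [i]; rewrite inE => /andP [_ Hi] ->; done.
    apply/subsetP => k Hk; have := subsetP szy k Hk => /imsetP [i Hi Ek].
    subst k; apply: imset_f; by rewrite inE Hi Hk.
  split; [|split; last by rewrite Ez].
    split.
      case/set0Pn: nez => k Hk; have := subsetP szy k Hk => /imsetP [i Hi Ek].
      apply/set0Pn; exists i; by rewrite inE Hi -Ek Hk.
    by move=> i j; rewrite !inE => /andP [Hi _] /andP [Hj _]; apply: Hcy.
  split; first by apply/subsetP => i; rewrite inE => /andP [].
  move=> i j; rewrite !inE => /andP [Hi Hzi] /andP [/nandP Hn Hj].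
  have Hzj : act a j \notin z by case: Hn => //; rewrite Hj.
  have [l1 n1] : le (act a i) (act a j) /\ act a i != act a j.
    by apply: Hz => //; rewrite inE Hzj imset_f.
  have nij : i != j by apply: contra n1 => /eqP ->.
  split => //.
  case: (Hcy i j Hi Hj) => // lji.
  by move: n1; rewrite (anti _ _ l1 (mono a _ _ lji)) eqxx.
- move=> x0; split; first done.
  split.
    move=> y _; exists [set y]; split; last first.
      by apply: Fr_max_eq => //; [rewrite inE | move=> j; rewrite inE => /eqP ->].
    split; first by apply/set0Pn; exists y; rewrite inE.
    by move=> i j; rewrite !inE => /eqP -> /eqP ->; left.
  split.
    move=> a x Fx; have [mx Hm] := @Fr_maxP _ _ x0 _ refl trans anti Fx.
    apply: Fr_max_eq => //; first exact: imset_f.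
    by move=> j /imsetP [i Hi ->]; apply: mono; apply: Hm.
  move=> y y' _ _; split.
    move=> lyy'.
    have Fy : Fr le [set y].
      split; first by apply/set0Pn; exists y; rewrite inE.
      by move=> i j; rewrite !inE => /eqP -> /eqP ->; left.
    have Fmy : Fr_max le x0 [set y] = y.
      by apply: Fr_max_eq => //; [rewrite inE | move=> j; rewrite inE => /eqP ->].
    case: (eqVneq y y') => [<-|nyy'].
      exists [set y], [set y]; split => //; split; first exact: subxx.
      by move=> i j _; rewrite inE => /andP [/negP].
    exists [set y], [set y; y']; split => //.
    + split; first by apply/set0Pn; exists y; rewrite !inE eqxx.
      move=> i j; rewrite !inE => /orP [] /eqP -> /orP [] /eqP ->; auto.
    + split; first by apply/subsetP => i; rewrite !inE => ->.
      move=> i j; rewrite !inE => /eqP -> /andP [njy /orP [/eqP E|/eqP ->]].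
        by rewrite E eqxx in njy.
      by [].
    + apply: Fr_max_eq => //; first by rewrite !inE eqxx orbT.
      by move=> j; rewrite !inE => /orP [] /eqP ->.
  move=> [x [x' [Fx Fx' [sxx' _] <- <-]]].
  have [mx _] := @Fr_maxP _ _ x0 _ refl trans anti Fx.
  have [_ Hm'] := @Fr_maxP _ _ x0 _ refl trans anti Fx'.
  by apply: Hm'; apply: (subsetP sxx').
Qed.
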